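(* In the setting of the context, write $\det(zI_q-\hat{E}(\kappa))=\sum_{\ell=-\bar r}^{\bar p}d_\ell(z)\kappa^\ell$ with $d_{-\bar r}\not\equiv 0$ and $d_{\bar p}\not\equiv 0$. Then $$\bar r\leq\sum_{i:\,c_i>0}c_i\qquad\text{and}\qquad \bar p\leq-\sum_{i:\,c_i<0}c_i.$$
   Context: Fix an integer $q\geq 2$, integer velocities $c_1,\dots,c_q\in\mathbb{Z}$, an invertible matrix $M\in\mathbb{R}^{q\times q}$, relaxation parameters $s_1\in\mathbb{R}$, $s_2,\dots,s_q\in(0,2]$, and $\epsilon\in\mathbb{R}^q$ with $\epsilon_1=1$. Set $K:=I_q+\mathrm{diag}(s_1,\dots,s_q)(\epsilon e_1^{\mathsf T}-I_q)$ and, for $\kappa\in\mathbb{C}\setminus\{0\}$, $\hat{E}(\kappa):=M\,\mathrm{diag}(\kappa^{-c_1},\dots,\kappa^{-c_q})M^{-1}K$. The coefficients $d_\ell(z)$ are polynomials in $z$; $\det(zI_q-\hat{E}(\kappa))$ is a Laurent polynomial in $\kappa$. *)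

(* Defs.v *)
(* Scalars: R an arbitrary real closed field (the reals are one);
   complex numbers C := R[i] (mathcomp-real-closed). *)
From HB Require Import structures.
From mathcomp Require Import all_boot all_order all_algebra.
From mathcomp Require Import complex.
Set Implicit Arguments. Unset Strict Implicit. Unset Printing Implicit Defensive.
Import Order.TTheory GRing.Theory Num.Theory.
Local Open Scope ring_scope.

(* Indices are 'I_q = {0,...,q-1}; the paper's index 1 is our index 0. *)

(* K := I_q + diag(s_1..s_q) (eps e_1^T - I_q) *)
Definition Kmat (R : rcfType) (q : nat) (s eps : 'I_q -> R) : 'M[R]_q :=
  1%:M + diag_mx (\row_i s i) *m
         ((\col_i eps i) *m (\row_j (((j : nat) == 0%N)%:R : R)) - 1%:M).

Definition Ehat (R : rcfType) (q : nat) (c : 'I_q -> int) (M : 'M[R]_q)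
  (s eps : 'I_q -> R) (kappa : R[i]) : 'M[R[i]]_q :=
  map_mx (real_complex R) M *m diag_mx (\row_i (kappa ^ (- c i)))
    *m map_mx (real_complex R) (invmx M) *m map_mx (real_complex R) (Kmat s eps).

(* Main.v *)
Require Import Defs.
From HB Require Import structures.
From mathcomp Require Import all_boot all_order all_algebra.
From mathcomp Require Import complex.
From mathcomp Require Import zify.
Import Order.TTheory GRing.Theory Num.Theory.
Local Open Scope ring_scope.

Lemma poly_nz_roots (F : numDomainType) (p : {poly F}) :
  (forall x : F, x != 0 -> p.[x] = 0) -> p = 0.
Proof.
move=> H; apply: (@roots_geq_poly_eq0 _ p [seq (i.+1)%:R | i <- iota 0 (size p)]).
- apply/allP => x /mapP [i _ ->]; apply/rootP; apply: H; by rewrite pnatr_eq0.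
- rewrite map_inj_uniq ?iota_uniq // => i j /eqP; rewrite eqr_nat => /eqP; by case.
- by rewrite size_map size_iota.
Qed.

Lemma size_prod_bound (F : comNzRingType) (I : Type) (r : seq I) (G : I -> {poly F}) (n : I -> nat) :
  (forall i, size (G i) <= (n i).+1)%N ->
  (size (\prod_(i <- r) G i)%R <= (\sum_(i <- r) n i).+1)%N.
Proof.
move=> H; elim: r => [|x r IH]; first by rewrite !big_nil size_poly1.
rewrite !big_cons; apply: leq_trans (size_polyMleq _ _) _.
have := H x; case: (size (G x)) => [|k] Hk.
  by rewrite add0n /=; apply: leq_trans (leq_pred _) _; apply: leq_trans IH _; rewrite ltnS leq_addl.
rewrite addSn /=; rewrite -addnS; exact: leq_add.
Qed.

Lemma det_size_bound (F : comNzRingType) q (P : 'M[{poly F}]_q) (n : 'I_q -> nat) :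
  (forall i j, size (P i j) <= (n i).+1)%N ->
  (size (\det P) <= (\sum_i n i).+1)%N.
Proof.
move=> H; rewrite /determinant.
apply: (big_ind (fun p : {poly F} => (size p <= (\sum_i n i).+1)%N)).
- by rewrite size_poly0.
- by move=> x y Hx Hy; apply: leq_trans (size_polyD _ _) _; rewrite geq_max Hx Hy.
move=> s _; case: (perm.odd_perm s); rewrite ?expr1 ?expr0 ?mulN1r ?mul1r ?size_polyN;
  exact: size_prod_bound.
Qed.
Lemma prod_exprz (F : fieldType) (x : F) I (r : seq I) (f : I -> int) :
  x != 0 -> \prod_(i <- r) x ^ f i = x ^ (\sum_(i <- r) f i).
Proof.
move=> nz; elim: r => [|j r IH]; first by rewrite !big_nil expr0z.
by rewrite !big_cons expfzDr // IH.
Qed.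

Lemma abs_split (x : int) : (absz x)%:Z = (if 0 < x then x else 0) + (if x < 0 then - x else 0).
Proof. by case: x => [[|n]|n] /=; rewrite ?addr0 // add0r NegzE opprK. Qed.

Lemma sum_abs q (c : 'I_q -> int) :
  (\sum_i absz (c i))%:Z = \sum_(i < q | 0 < c i) c i - \sum_(i < q | c i < 0) c i.
Proof.
rewrite (big_morph Posz PoszD (erefl 0%:Z)).
rewrite (eq_bigr _ (fun i _ => abs_split (c i))) big_split /= -sumrN.
by rewrite [X in _ = X + _]big_mkcond [X in _ = _ + X]big_mkcond /=;
  congr (_ + _); apply: eq_bigr => i _; case: ifP; rewrite ?oppr0.
Qed.

Lemma entry_eval (F : fieldType) (x : int) (a b k : F) : k != 0 ->
  (if 0 < x then a *: 'X^(absz x) - b%:P else a%:P - b *: 'X^(absz x)).[k]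
  = k ^ (if 0 < x then x else 0) * (a - k ^ (- x) * b).
Proof.
move=> nk; case: x => [[|n]|n] /=.
- by rewrite oppr0 !expr0z !mul1r expr0 alg_polyC -polyCB hornerC.
- rewrite hornerD hornerN hornerZ hornerXn hornerC mulrBr mulrA.
  by rewrite -expfzDr // subrr expr0z mul1r mulrC.
- rewrite expr0z mul1r hornerD hornerN hornerZ hornerXn hornerC NegzE opprK.
  by rewrite mulrC.
Qed.

Lemma A_entry (F : comNzRingType) q (Mi B : 'M[F]_q) (z : F) (f : 'I_q -> F) i j :
  (z *: Mi - diag_mx (\row_i f i) *m B) i j = z * Mi i j - f i * B i j.
Proof. by rewrite mul_diag_mx !mxE. Qed.

Lemma key (R : rcfType) (q : nat) (c : 'I_q -> int) (M : 'M[R]_q) (hM : M \in unitmx)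
  (s eps : 'I_q -> R) (z : R[i]) :
  exists g : {poly R[i]}, (size g <= (\sum_i absz (c i)).+1)%N /\
   forall kappa : R[i], kappa != 0 ->
     kappa ^ (\sum_(i < q | 0 < c i) c i) * \det (z%:M - Ehat c M s eps kappa) = g.[kappa].
Proof.
set Mc := map_mx (real_complex R) M.
set Mi := map_mx (real_complex R) (invmx M).
set Kc := map_mx (real_complex R) (Kmat s eps).
have McMi : Mc *m Mi = 1%:M by rewrite -map_mxM mulmxV // map_mx1.
set B := Mi *m Kc.
pose P : 'M[{poly R[i]}]_q := \matrix_(i, j)
  (if 0 < c i then (z * Mi i j) *: 'X^(absz (c i)) - (B i j)%:P
   else (z * Mi i j)%:P - B i j *: 'X^(absz (c i))).
exists (\det Mc *: \det P); split.
  apply: leq_trans (size_scale_leq _ _) _; apply: det_size_bound => i j.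
  rewrite mxE; case: ifP => _; apply: leq_trans (size_polyD _ _) _;
    rewrite geq_max size_polyN; apply/andP; split.
    1-4: try (apply: leq_trans (size_scale_leq _ _) _; by rewrite size_polyXn).
    1-2: by rewrite (leq_trans (size_polyC_leq1 _)).
move=> k nk.
pose A := z *: Mi - diag_mx (\row_i (k ^ (- c i))) *m B.
have E1 : z%:M - Ehat c M s eps k = Mc *m A.
  by rewrite /Ehat /A mulmxBr -!mulmxA -scalemxAr McMi scalemx1 !mulmxA.
pose e := \row_i (k ^ (if 0 < c i then c i else 0)).
have E2 : map_mx (horner_eval k) P = diag_mx e *m A.
  apply/matrixP => i j.
  transitivity ((P i j).[k]); first by rewrite mxE horner_evalE.
  transitivity (e 0 i * A i j); last by rewrite mul_diag_mx [RHS]mxE.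
  by rewrite /A A_entry [P i j]mxE [e 0 i]mxE entry_eval.
rewrite hornerZ -horner_evalE -det_map_mx /= E2 E1 !det_mulmx det_diag.
have -> : \prod_i e 0 i = k ^ (\sum_(i < q | 0 < c i) c i).
  by rewrite [in RHS]big_mkcond -prod_exprz //; apply: eq_bigr => i _; rewrite mxE.
by rewrite mulrCA.
Qed.


Theorem mainTheorem3 (R : rcfType) (q : nat) (hq : (2 <= q)%N)
  (c : 'I_q -> int) (M : 'M[R]_q) (hM : M \in unitmx)
  (s eps : 'I_q -> R)
  (hs : forall i : 'I_q, (0 < (i : nat))%N -> 0 < s i <= 2)
  (heps : forall i : 'I_q, (i : nat) = 0%N -> eps i = 1)
  (rbar pbar : int) (d : int -> {poly R[i]})
  (hrp : - rbar <= pbar)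
  (hdr : d (- rbar) != 0) (hdp : d pbar != 0)
  (hdet : forall z kappa : R[i], kappa != 0 ->
     \det (z%:M - Ehat c M s eps kappa) =
     \sum_(k < (absz (rbar + pbar)).+1) (d (k%:Z - rbar)).[z] * kappa ^ (k%:Z - rbar)) :
  rbar <= \sum_(i < q | 0 < c i) c i /\ pbar <= - \sum_(i < q | c i < 0) c i.
Proof.
set a := \sum_(i < q | 0 < c i) c i.
set b := - \sum_(i < q | c i < 0) c i.
have a0 : 0 <= a by apply: sumr_ge0 => i /ltW.
have b0 : 0 <= b by rewrite oppr_ge0; apply: sumr_le0 => i /ltW.
have hab : (\sum_i absz (c i))%:Z = a + b by rewrite sum_abs.
set N := absz (rbar + pbar).
have hN : N%:Z = rbar + pbar by rewrite /N; lia.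
pose pz (z : R[i]) := \poly_(k < N.+1) (d (k%:Z - rbar)).[z].
have hp : forall z k, k != 0 -> (pz z).[k] = k ^ rbar * \det (z%:M - Ehat c M s eps k).
  move=> z k nk; rewrite hdet // mulr_sumr horner_poly; apply: eq_bigr => j _.
  rewrite mulrCA -expfzDr // exprnP; congr (_ * (_ ^ _)); by rewrite addrCA subrr addr0.
have part1 : rbar <= a.
  apply/negPn/negP; rewrite -ltNge => H.
  set m := absz (rbar - a).
  have hm : m%:Z = rbar - a by rewrite /m; lia.
  have m0 : (0 < m)%N by lia.
  move/negP: hdr; apply; apply/eqP; apply: poly_nz_roots => z _.
  have [g [_ hg]] := @key R q c M hM s eps z.
  have E : pz z = 'X^m * g.
    apply/eqP; rewrite -subr_eq0; apply/eqP; apply: poly_nz_roots => k nk.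
    rewrite hornerD hornerN hornerM hornerXn hp // -hg //.
    have -> : k ^ rbar = k ^+ m * k ^ a by rewrite exprnP -expfzDr // hm subrK.
    by rewrite mulrA subrr.
  have := congr1 (fun p : {poly R[i]} => p`_0) E.
  by rewrite /= coefXnM m0 coef_poly /= sub0r.
split=> //.
apply/negPn/negP; rewrite -ltNge => H.
set m := absz (a - rbar).
have hm : m%:Z = a - rbar by rewrite /m; lia.
move/negP: hdp; apply; apply/eqP; apply: poly_nz_roots => z _.
have [g [hsz hg]] := @key R q c M hM s eps z.
have E : g = 'X^m * pz z.
  apply/eqP; rewrite -subr_eq0; apply/eqP; apply: poly_nz_roots => k nk.
  rewrite hornerD hornerN hornerM hornerXn hp // -hg //.
  have -> : k ^ a = k ^+ m * k ^ rbar by rewrite exprnP -expfzDr // hm subrK.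
  by rewrite mulrA subrr.
have := congr1 (fun p : {poly R[i]} => p`_(m + N)) E.
rewrite /= coefXnM ltnNge leq_addr /= addKn coef_poly ltnSn.
rewrite nth_default; last by apply: leq_trans hsz _; lia.
by move=> ->; rewrite hN addrC addKr.
Qed.
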